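(* Let $f:\mathbb{N}\to[0,\infty)$ be a weakly super-multiplicative function which has a normal order $g:(0,\infty)\to(0,\infty)$ (so $g$ is strictly positive), where $g$ is either non-decreasing or $\log$-uniformly continuous. Then \[ \sup_{n\ge 2}\frac{\log f(n)}{\log n} \;=\; \lim\operatorname{ess}_{n}\frac{\log f(n)}{\log n}, \] i.e. the essential limit on the right exists (possibly equal to $\infty$) and equals the supremum on the left (with the convention $\log 0=-\infty$).
   Context: A function $f:\mathbb{N}\to[0,\infty)$ is weakly super-multiplicative if for all $n\in\mathbb{N}$ and all $\epsilon>0$ there exist $x_0>0$ and $\delta>0$ such that for all real $x>x_0$, $\#\{m\in\mathbb{N}\cap[x,(1+\epsilon)x]: f(nm)\ge(1-\epsilon)f(n)f(m)\}\ge\delta x$. A function $f:\mathbb{N}\to[0,\infty)$ has normal order $g$ if for every $\epsilon>0$ the set $\{n\in\mathbb{N}: |f(n)-g(n)|\ge\epsilon g(n)\}$ has upper (natural) density $0$. A function $g:(0,\infty)\to(0,\infty)$ is $\log$-uniformly continuous if for every $\epsilon>0$ there is $\delta>0$ such that for all $x,y>0$ with $|x/y-1|<\delta$ we have $|g(x)/g(y)-1|<\epsilon$. The essential limit of a sequence $(a_n)$ exists and equals $a\in\mathbb{R}$ if for every $\epsilon>0$ the set $\{n:|a_n-a|>\epsilon\}$ has natural density $0$; it equals $\infty$ if for every $M\in\mathbb{R}$ the set $\{n: a_n<M\}$ has natural density $0$. *)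

(* Defs.v *)
From Stdlib Require Import Reals Lra Lia List Classical ClassicalEpsilon.
Import ListNotations.
Open Scope R_scope.

Definition indic (P : Prop) : R :=
  if excluded_middle_informative P then 1 else 0.

Fixpoint cnt (A : nat -> Prop) (N : nat) : R :=
  match N with
  | O => 0
  | S k => cnt A k + indic (A (S k))
  end.

Definition upper_density_zero (A : nat -> Prop) : Prop :=
  forall eps : R, 0 < eps ->
    exists N0 : nat, forall N : nat, (N0 <= N)%nat -> cnt A N / INR N <= eps.

Definition density_zero (A : nat -> Prop) : Prop :=
  Un_cv (fun N => cnt A N / INR N) 0.

(* Weak super-multiplicativity. N = {1,2,...}.  The cardinality bound
   #{...} >= delta*x is expressed by a duplicate-free list of such m. *)
Definition weakly_supermultiplicative (f : nat -> R) : Prop :=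
  forall (n : nat) (eps : R), (1 <= n)%nat -> 0 < eps ->
    exists x0 delta : R, 0 < x0 /\ 0 < delta /\
      forall x : R, x0 < x ->
        exists l : list nat, NoDup l /\
          (forall m, In m l ->
             x <= INR m <= (1 + eps) * x /\
             f (n * m)%nat >= (1 - eps) * f n * f m) /\
          delta * x <= INR (length l).

Definition normal_order (f : nat -> R) (g : R -> R) : Prop :=
  forall eps : R, 0 < eps ->
    upper_density_zero (fun n => (1 <= n)%nat /\
                                 Rabs (f n - g (INR n)) >= eps * g (INR n)).

Definition nondecreasing_pos (g : R -> R) : Prop :=
  forall x y : R, 0 < x -> x <= y -> g x <= g y.

Definition log_uniformly_continuous (g : R -> R) : Prop :=
  forall eps : R, 0 < eps -> exists delta : R, 0 < delta /\
    forall x y : R, 0 < x -> 0 < y -> Rabs (x / y - 1) < delta ->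
      Rabs (g x / g y - 1) < eps.

(* log f(n) / log n, with None standing for -infinity (when f n = 0). *)
Definition logratio (f : nat -> R) (n : nat) : option R :=
  if Rlt_dec 0 (f n) then Some (ln (f n) / ln (INR n)) else None.

Inductive Rinf : Type := Fin (a : R) | PInf.

Definition is_sup_logratio (f : nat -> R) (l : Rinf) : Prop :=
  match l with
  | Fin a =>
      (forall n r, (2 <= n)%nat -> logratio f n = Some r -> r <= a) /\
      (forall eps, 0 < eps -> exists n r,
          (2 <= n)%nat /\ logratio f n = Some r /\ a - eps < r)
  | PInf =>
      forall M, exists n r, (2 <= n)%nat /\ logratio f n = Some r /\ M < r
  end.

Definition is_esslim_logratio (f : nat -> R) (l : Rinf) : Prop :=
  match l with
  | Fin a =>
      forall eps, 0 < eps ->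
        density_zero (fun n => (2 <= n)%nat /\
          match logratio f n with
          | Some r => Rabs (r - a) > eps
          | None => True
          end)
  | PInf =>
      forall M,
        density_zero (fun n => (2 <= n)%nat /\
          match logratio f n with
          | Some r => r < M
          | None => True
          end)
  end.

(* Main.v *)
Require Import Defs.
From Stdlib Require Import Reals Lra Lia List ZArith Classical ClassicalEpsilon.
Import ListNotations.
Open Scope R_scope.


Lemma indic_bounds P : 0 <= indic P <= 1.
Proof. unfold indic; destruct (excluded_middle_informative P); lra. Qed.
Lemma indic_true (P : Prop) : P -> indic P = 1.
Proof. intro H; unfold indic; destruct (excluded_middle_informative P); tauto. Qed.
Lemma indic_false (P : Prop) : ~P -> indic P = 0.
Proof. intro H; unfold indic; destruct (excluded_middle_informative P); tauto. Qed.
Lemma indic_mono (P Q:Prop) : (P -> Q) -> indic P <= indic Q.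
Proof. intro H; unfold indic; destruct (excluded_middle_informative P);
  destruct (excluded_middle_informative Q); try lra; tauto. Qed.
Lemma indic_or (P Q : Prop) : indic (P \/ Q) <= indic P + indic Q.
Proof. unfold indic; destruct (excluded_middle_informative (P \/ Q));
  destruct (excluded_middle_informative P);
  destruct (excluded_middle_informative Q); try lra; tauto. Qed.

Lemma cnt_nonneg A N : 0 <= cnt A N.
Proof. induction N; simpl; [lra|]. pose proof (indic_bounds (A (S N))); lra. Qed.
Lemma cnt_mono (A B : nat -> Prop) N : (forall m, A m -> B m) -> cnt A N <= cnt B N.
Proof. intro H; induction N; simpl; [lra|].
  pose proof (indic_mono (A (S N)) (B (S N)) (H _)); lra. Qed.
Lemma cnt_union (A B : nat -> Prop) N : cnt (fun m => A m \/ B m) N <= cnt A N + cnt B N.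
Proof. induction N; simpl; [lra|]. pose proof (indic_or (A (S N)) (B (S N))); lra. Qed.
Lemma cnt_monoN A k K : (k <= K)%nat -> cnt A k <= cnt A K.
Proof. induction K; intro H.
  - replace k with 0%nat by lia; lra.
  - destruct (Nat.eq_dec k (S K)) as [->|]; [lra|].
    simpl. pose proof (indic_bounds (A (S K))). assert (cnt A k <= cnt A K) by (apply IHK; lia). lra. Qed.
Lemma cnt_mul (A : nat -> Prop) n N : (1 <= n)%nat -> cnt (fun m => A (n*m)%nat) N <= cnt A (n*N).
Proof. intro Hn; induction N.
  - rewrite Nat.mul_0_r; simpl; lra.
  - simpl cnt at 1. replace (n * S N)%nat with (S (n*N + (n-1))) by lia. simpl cnt.
    pose proof (cnt_monoN A (n*N) (n*N + (n-1)) ltac:(lia)). lra. Qed.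
Lemma cnt_bounded (A : nat -> Prop) M N : (forall m, A m -> (m <= M)%nat) -> cnt A N <= INR M.
Proof. intro H. assert (cnt A N <= INR (Nat.min N M)).
  { induction N; cbn [cnt]; [simpl; lra|].
    destruct (le_lt_dec (S N) M).
    - replace (Nat.min (S N) M) with (S N) by lia. replace (Nat.min N M) with N in IHN by lia.
      rewrite S_INR. pose proof (indic_bounds (A (S N))); lra.
    - rewrite indic_false by (intro HA; specialize (H _ HA); lia).
      apply Rle_trans with (INR (Nat.min N M)); [lra|]. apply le_INR; lia. }
  apply Rle_trans with (1 := H0). apply le_INR; lia. Qed.
Lemma cnt_list (A : nat -> Prop) N : forall l, NoDup l ->
  (forall m, In m l -> (1 <= m <= N)%nat /\ A m) -> INR (length l) <= cnt A N.
Proof. induction N; intros l Hl H.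
  - destruct l as [|a l]; simpl; [lra|]. destruct (H a (or_introl eq_refl)); lia.
  - simpl. destruct (in_dec Nat.eq_dec (S N) l) as [Hi|Hi].
    + destruct (in_split _ _ Hi) as [l1 [l2 ->]].
      rewrite (indic_true _ (proj2 (H _ Hi))).
      assert (INR (length (l1 ++ l2)) <= cnt A N).
      { apply IHN. eapply NoDup_remove_1; eauto.
        intros m Hm. pose proof (NoDup_remove_2 _ _ _ Hl) as Hn.
        assert (In m (l1 ++ S N :: l2)) as Hm'.
        { apply in_app_or in Hm; apply in_or_app; destruct Hm; auto; right; right; auto. }
        destruct (H _ Hm') as [[H1 H2] H3]. split; auto. split; auto.
        destruct (Nat.eq_dec m (S N)); [subst; tauto| lia]. }
      rewrite length_app in *. simpl length. rewrite Nat.add_succ_r, S_INR. lra.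
    + pose proof (indic_bounds (A (S N))).
      assert (INR (length l) <= cnt A N); [|lra].
      apply IHN; auto. intros m Hm. destruct (H _ Hm) as [[H1 H2] H3].
      split; auto. split; auto. destruct (Nat.eq_dec m (S N)); [subst; tauto| lia]. Qed.
Lemma cnt_ge (A : nat -> Prop) N : (forall m, (2 <= m)%nat -> A m) -> INR N - 1 <= cnt A N.
Proof. intro H; induction N; simpl; [lra|].
  destruct N.
  - simpl. pose proof (indic_bounds (A 1%nat)); lra.
  - rewrite (indic_true _ (H (S (S N)) ltac:(lia))). rewrite S_INR in *. lra. Qed.

Lemma inv_INR_nonneg N : 0 <= / INR N.
Proof. destruct N. simpl; rewrite Rinv_0; lra.
  left; apply Rinv_0_lt_compat, lt_0_INR; lia. Qed.
Lemma div_le_intro a b e : 0 < a -> b <= e * a -> b / a <= e.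
Proof. intros Ha H. unfold Rdiv. apply Rmult_le_reg_r with a; auto.
  rewrite Rmult_assoc, Rinv_l by lra. lra. Qed.
Lemma div_le_elim a b e : 0 < a -> b / a <= e -> b <= e * a.
Proof. intros Ha H. replace b with (b / a * a) by (field; lra).
  apply Rmult_le_compat_r; lra. Qed.

Lemma udz_mono (A B : nat -> Prop) : (forall m, A m -> B m) ->
  upper_density_zero B -> upper_density_zero A.
Proof. intros H HB eps he. destruct (HB eps he) as [N0 HN]; exists N0; intros N HN'.
  specialize (HN N HN'). apply Rle_trans with (2 := HN). unfold Rdiv.
  apply Rmult_le_compat_r; [apply inv_INR_nonneg| apply cnt_mono; auto]. Qed.
Lemma udz_union (A B : nat -> Prop) : upper_density_zero A -> upper_density_zero B ->
  upper_density_zero (fun m => A m \/ B m).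
Proof. intros HA HB eps he.
  destruct (HA (eps/2) ltac:(lra)) as [N1 H1]. destruct (HB (eps/2) ltac:(lra)) as [N2 H2].
  exists (Nat.max N1 N2); intros N HN.
  specialize (H1 N ltac:(lia)); specialize (H2 N ltac:(lia)).
  apply Rle_trans with (cnt A N / INR N + cnt B N / INR N); [|lra].
  unfold Rdiv; rewrite <- Rmult_plus_distr_r.
  apply Rmult_le_compat_r; [apply inv_INR_nonneg| apply cnt_union]. Qed.
Lemma udz_bounded M : upper_density_zero (fun m => (m <= M)%nat).
Proof. intros eps he. destruct (INR_unbounded (INR M / eps)) as [N0 HN0].
  exists (S N0). intros N HN. assert (0 < INR N) by (apply lt_0_INR; lia).
  apply div_le_intro; auto. apply Rle_trans with (INR M); [apply cnt_bounded; auto|].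
  assert (INR N0 <= INR N) by (apply le_INR; lia).
  assert (INR M < eps * INR N0); [|nra].
  apply Rmult_lt_reg_r with (/eps). apply Rinv_0_lt_compat; lra.
  replace (eps * INR N0 * / eps) with (INR N0) by (field; lra). exact HN0. Qed.
Lemma udz_dz A : upper_density_zero A -> density_zero A.
Proof. intros H eps he. destruct (H (eps/2) ltac:(lra)) as [N0 HN]. exists N0.
  intros N HN'. specialize (HN N ltac:(lia)). unfold R_dist. rewrite Rminus_0_r.
  rewrite Rabs_right. lra. apply Rle_ge. unfold Rdiv. apply Rmult_le_pos.
  apply cnt_nonneg. apply inv_INR_nonneg. Qed.

Definition bad (f : nat -> R) (g : R -> R) eps := fun k : nat =>
  (1 <= k)%nat /\ Rabs (f k - g (INR k)) >= eps * g (INR k).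

Lemma exists_nat_between r : 0 <= r -> exists N:nat, r <= INR N <= r + 1.
Proof. intros Hr. destruct (archimed r) as [H1 H2].
  assert (0 < up r)%Z by (apply lt_IZR; simpl; lra).
  exists (Z.to_nat (up r)). rewrite INR_IZR_INZ, Z2Nat.id by lia. lra. Qed.

Lemma INR_pos_ge1 m x : 0 < x -> x <= INR m -> (1 <= m)%nat.
Proof. intros. destruct m; simpl in *; lia || lra. Qed.

Lemma goodm (f : nat -> R) (g : R -> R)
  (hwsm : weakly_supermultiplicative f) (hno : normal_order f g) n eps :
  (1 <= n)%nat -> 0 < eps -> eps < 1 ->
  exists X, 0 < X /\ forall x, X < x -> exists m:nat,
   x <= INR m <= (1+eps)*x /\ f (n*m)%nat >= (1-eps) * f n * f m /\
   Rabs (f m - g (INR m)) < eps * g (INR m) /\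
   Rabs (f (n*m)%nat - g (INR (n*m))) < eps * g (INR (n*m)).
Proof.
  intros Hn he he1.
  destruct (hwsm n eps Hn he) as [x0 [delta [Hx0 [Hd Hl]]]].
  assert (Hn' : 1 <= INR n) by (apply (le_INR 1); auto).
  set (tau := delta / (4 * (1 + INR n) * (1 + eps))).
  assert (Htau: 0 < tau). { unfold tau. apply Rdiv_lt_0_compat; auto. nra. }
  destruct (hno eps he tau Htau) as [N0 HN0].
  exists (Rmax x0 (Rmax 1 (INR N0))). split.
  { apply Rlt_le_trans with x0; auto; apply Rmax_l. }
  intros x Hx.
  pose proof (Rmax_l x0 (Rmax 1 (INR N0))). pose proof (Rmax_r x0 (Rmax 1 (INR N0))).
  pose proof (Rmax_l 1 (INR N0)). pose proof (Rmax_r 1 (INR N0)).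
  destruct (Hl x ltac:(lra)) as [l [Hnd [Hin Hlen]]].
  destruct (classic (exists m, In m l /\ ~ bad f g eps m /\ ~ bad f g eps (n*m)%nat))
    as [[m [Hm [B1 B2]]]|Hc].
  - exists m. destruct (Hin m Hm) as [[Ha Hb] Hc].
    assert (Hm1 : (1 <= m)%nat) by (apply (INR_pos_ge1 m x); lra).
    split; [lra|]. split; auto. unfold bad in B1, B2. split.
    + apply Rnot_ge_lt. intro; apply B1; auto.
    + apply Rnot_ge_lt. intro; apply B2; split; auto; lia.
  - exfalso. destruct (exists_nat_between ((1+eps)*x)) as [N [HN1 HN2]]; [nra|].
    assert (Hcl: INR (length l) <= cnt (fun m => bad f g eps m \/ bad f g eps (n*m)%nat) N).
    { apply cnt_list; auto. intros m Hm. destruct (Hin m Hm) as [[Ha Hb] _].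
      split; [split|].
      - apply (INR_pos_ge1 m x); lra.
      - apply INR_le; lra.
      - apply NNPP; intro Hnb. apply Hc; exists m; tauto. }
    pose proof (cnt_union (bad f g eps) (fun m => bad f g eps (n*m)%nat) N) as U.
    pose proof (cnt_mul (bad f g eps) n N Hn) as M.
    assert (HN0N : (N0 <= N)%nat) by (apply INR_le; nra).
    assert (P1 : 0 < INR N) by nra.
    assert (P2 : 0 < INR (n*N)) by (rewrite mult_INR; nra).
    pose proof (div_le_elim _ _ _ P1 (HN0 N HN0N)) as C1.
    pose proof (div_le_elim _ _ _ P2 (HN0 (n*N)%nat ltac:(nia))) as C2.
    unfold bad in *. rewrite mult_INR in C2.
    assert (tau * (1 + INR n) * INR N <= delta * x / 2).
    { apply Rle_trans with (tau * (1 + INR n) * (2 * (1 + eps) * x)).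
      apply Rmult_le_compat_l; [nra| nra].
      right. unfold tau. field. lra. }
    nra.
Qed.

Lemma bernoulli a k : 0 <= a -> 1 + INR k * a <= (1+a)^k.
Proof. intro Ha; induction k; [simpl; lra|]. rewrite S_INR; cbn [pow].
  assert (0 <= INR k) by apply pos_INR. nra. Qed.
Lemma pow_unbounded q B : 1 < q -> exists k, B <= q^k.
Proof. intro Hq. destruct (INR_archimed (q-1) B ltac:(lra)) as [k Hk]. exists k.
  pose proof (bernoulli (q-1) k ltac:(lra)). replace (1 + (q-1)) with q in H by ring. lra. Qed.
Lemma ln_le_mono x y : 0 < x -> x <= y -> ln x <= ln y.
Proof. intros Hx [H|H]; [left; apply ln_increasing; auto| subst; lra]. Qed.
Lemma ln_pos_ge1 x : 1 <= x -> 0 <= ln x.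
Proof. intro; rewrite <- ln_1; apply ln_le_mono; lra. Qed.
Lemma exp_le_mono x y : x <= y -> exp x <= exp y.
Proof. intros [H|H]; [left; apply exp_increasing; auto| subst; lra]. Qed.

Lemma iter_bound (g : R -> R) X lam A c :
  0 < X -> 1 < lam -> 0 < A -> 0 < c ->
  (forall y, X <= y -> A * g y <= g (lam*y)) ->
  (forall z, X <= z <= lam*X -> c <= g z) ->
  forall y, X <= y -> c * exp (- Rabs (ln A)) * exp (ln A * ln (y/X) / ln lam) <= g y.
Proof.
  intros HX Hl HA Hc Hstep Hloc.
  assert (HL : 0 < ln lam) by (rewrite <- ln_1; apply ln_increasing; lra).
  set (a := ln A). set (L := ln lam) in *.
  assert (Base : forall y, X <= y <= lam * X ->
     c * exp (- Rabs a) * exp (a * ln (y/X) / L) <= g y).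
  { intros y [H1 H2].
    assert (T0 : 0 <= ln (y/X)).
    { apply ln_pos_ge1. apply (Rmult_le_reg_r X); auto. unfold Rdiv.
      rewrite Rmult_assoc, Rinv_l; lra. }
    assert (T1 : ln (y/X) <= L).
    { apply ln_le_mono. apply Rdiv_lt_0_compat; lra.
      apply (Rmult_le_reg_r X); auto. unfold Rdiv.
      rewrite Rmult_assoc, Rinv_l; lra. }
    set (t := ln (y/X)) in *.
    assert (a * t / L <= Rabs a).
    { apply Rle_trans with (Rabs a * t / L).
      unfold Rdiv. apply Rmult_le_compat_r. left; apply Rinv_0_lt_compat; auto.
      apply Rmult_le_compat_r; auto; apply Rle_abs.
      replace (Rabs a * t / L) with (Rabs a * (t / L)) by (unfold Rdiv; ring).
      assert (t / L <= 1).
      { apply (Rmult_le_reg_r L); auto. replace (t / L * L) with t by (field; lra). lra. }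
      pose proof (Rabs_pos a). assert (0 <= t / L) by (apply Rmult_le_pos; [lra| left; apply Rinv_0_lt_compat; lra]).
      nra. }
    rewrite Rmult_assoc, <- exp_plus.
    apply Rle_trans with (c * 1). apply Rmult_le_compat_l; [lra|].
    rewrite <- exp_0; apply exp_le_mono; lra.
    specialize (Hloc y ltac:(lra)); lra. }
  assert (P : forall k y, X <= y <= lam^(S k) * X ->
     c * exp (- Rabs a) * exp (a * ln (y/X) / L) <= g y).
  { induction k; intros y [H1 H2].
    - apply Base; simpl in H2; lra.
    - destruct (Rle_lt_dec y (lam*X)) as [Hy|Hy]; [apply Base; lra|].
      set (y' := y / lam).
      assert (Hy' : y = lam * y') by (unfold y'; field; lra).
      assert (R1 : X <= y' <= lam ^ S k * X).
      { split.
        - apply (Rmult_le_reg_l lam); [lra|]. rewrite <- Hy'. lra.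
        - apply (Rmult_le_reg_l lam); [lra|]. rewrite <- Hy'. simpl in H2 |- *; lra. }
      specialize (IHk y' R1). specialize (Hstep y' ltac:(lra)).
      rewrite Hy' at 2.
      apply Rle_trans with (2 := Hstep).
      assert (E : ln (y/X) = ln (y'/X) + L).
      { unfold L. rewrite <- ln_mult. f_equal. rewrite Hy'; field; lra.
        apply Rdiv_lt_0_compat; lra. lra. }
      rewrite E.
      replace (a * (ln (y'/X) + L) / L) with (a + a * ln (y'/X) / L) by (field; lra).
      rewrite exp_plus. unfold a at 2. rewrite exp_ln by auto.
      assert (0 < exp (- Rabs a)) by apply exp_pos.
      assert (0 < exp (a * ln (y'/X) / L)) by apply exp_pos.
      replace (c * exp (- Rabs a) * (A * exp (a * ln (y' / X) / L)))
        with (A * (c * exp (- Rabs a) * exp (a * ln (y' / X) / L))) by ring.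
      apply Rmult_le_compat_l; lra. }
  intros y Hy. destruct (pow_unbounded lam (y/X) Hl) as [k Hk].
  apply (P k). split; auto.
  assert (lam^k <= lam^(S k)) by (apply Rle_pow; [lra|lia]).
  assert (y <= lam^k * X); [|nra].
  apply (Rmult_le_reg_r (/X)). apply Rinv_0_lt_compat; auto.
  rewrite Rmult_assoc, Rinv_r by lra. unfold Rdiv in Hk. lra.
Qed.

Lemma luc_lower (g : R -> R) : (forall x, 0<x -> 0<g x) -> log_uniformly_continuous g ->
  forall X B, 0 < X -> exists c, 0 < c /\ forall z, X <= z <= B -> c <= g z.
Proof.
  intros hg hl X B HX. destruct (hl (1/2) ltac:(lra)) as [d [Hd Hdl]].
  set (q := 1 + d/2).
  assert (Hq : 1 < q) by (unfold q; lra).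
  assert (P : forall j z, X <= z <= X * q^j -> g X / 2^j <= g z).
  { induction j; intros z [H1 H2].
    - simpl in *. replace z with X by lra. lra.
    - set (z' := Rmax X (z/q)).
      assert (Hz'1 : X <= z') by apply Rmax_l.
      assert (Hqj : 1 <= q^j) by (apply pow_R1_Rle; lra).
      assert (Hzq : z / q <= X * q^j).
      { apply (Rmult_le_reg_r q); [lra|]. unfold Rdiv. rewrite Rmult_assoc, Rinv_l by lra.
        simpl in H2; lra. }
      assert (Hz'2 : z' <= X * q^j) by (apply Rmax_lub; nra).
      specialize (IHj z' (conj Hz'1 Hz'2)).
      assert (Hzz : z' <= z).
      { apply Rmax_lub; auto. apply (Rmult_le_reg_r q); [lra|]. unfold Rdiv.
        rewrite Rmult_assoc, Rinv_l by lra. nra. }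
      assert (Hzz2 : z <= q * z').
      { apply Rle_trans with (q * (z/q)). right; field; lra.
        apply Rmult_le_compat_l; [lra| apply Rmax_r]. }
      assert (Habs : Rabs (z / z' - 1) < d).
      { assert (1 <= z/z' <= q).
        { split; apply (Rmult_le_reg_r z'); try lra; unfold Rdiv;
          rewrite Rmult_assoc, Rinv_l by lra; lra. }
        rewrite Rabs_right by lra. unfold q in *; lra. }
      specialize (Hdl z z' ltac:(lra) ltac:(lra) Habs).
      apply Rabs_def2 in Hdl. destruct Hdl as [_ Hu].
      assert (Hgz' : 0 < g z') by (apply hg; lra).
      assert (g z' / 2 <= g z).
      { assert (E : g z = g z / g z' * g z') by (field; lra).
        set (u := g z / g z') in *. rewrite E.
        assert (0 <= (u - 1/2) * g z') by (apply Rmult_le_pos; lra). nra. }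
      simpl. replace (g X / (2 * 2^j)) with (g X / 2^j / 2) by (field; apply pow_nonzero; lra).
      lra. }
  destruct (pow_unbounded q (B / X) Hq) as [j Hj].
  exists (g X / 2^j). split. apply Rdiv_lt_0_compat; [apply hg; auto| apply pow_lt; lra].
  intros z Hz. apply (P j). split; [lra|].
  apply Rle_trans with B; [lra|].
  apply (Rmult_le_reg_r (/X)). apply Rinv_0_lt_compat; auto.
  replace (X * q^j * / X) with (q^j) by (field; lra). unfold Rdiv in Hj; lra.
Qed.

Lemma key_ineq (f : nat -> R) (g : R -> R) n m e : 0 < e < 1 -> 0 < f n ->
  f (n*m)%nat >= (1-e) * f n * f m ->
  Rabs (f m - g (INR m)) < e * g (INR m) ->
  Rabs (f (n*m)%nat - g (INR (n*m))) < e * g (INR (n*m)) ->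
  (1-e)^2 * f n * g (INR m) <= (1+e) * g (INR (n*m)).
Proof. intros He Hf H1 H2 H3. apply Rabs_def2 in H2. apply Rabs_def2 in H3.
  assert (A1 : (1-e) * g (INR m) <= f m) by lra.
  assert (A2 : f (n*m)%nat <= (1+e) * g (INR (n*m))) by lra.
  assert (0 <= (1-e) * f n) by (apply Rmult_le_pos; lra).
  assert ((1-e) * f n * ((1-e) * g (INR m)) <= (1-e) * f n * f m)
    by (apply Rmult_le_compat_l; auto).
  replace ((1-e)^2 * f n * g (INR m)) with ((1-e) * f n * ((1-e) * g (INR m))) by ring.
  lra. Qed.

Lemma arith_K e F G H : 0 < e < 1 -> 0 <= F -> 0 <= G ->
  (1-e)^3 * F * G <= (1+e)^2 * H -> (1-e)^3/(1+e)^2 * F * G <= H.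
Proof. intros He HF HG Hh.
  replace ((1-e)^3/(1+e)^2 * F * G) with ((1-e)^3 * F * G / (1+e)^2) by (field; lra).
  apply Rle_trans with ((1+e)^2 * H / (1+e)^2).
  unfold Rdiv; apply Rmult_le_compat_r; auto. left; apply Rinv_0_lt_compat; nra.
  right; field; lra. Qed.

Lemma ratio_bounds a b t : 0 < b -> Rabs (a / b - 1) < t -> (1 - t) * b <= a <= (1+t) * b.
Proof. intros Hb H. apply Rabs_def2 in H. destruct H as [H1 H2].
  assert (E : a = a / b * b) by (field; lra). set (u := a / b) in *. rewrite E.
  split; nra. Qed.

Lemma Qlemma (f : nat -> R) (g : R -> R) (hf : forall n, 0 <= f n)
  (hg : forall x, 0 < x -> 0 < g x)
  (hwsm : weakly_supermultiplicative f) (hno : normal_order f g)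
  (hreg : nondecreasing_pos g \/ log_uniformly_continuous g) n eps :
  (2<=n)%nat -> 0 < f n -> 0 < eps -> eps <= 1/2 ->
  exists X lam c, 0 < X /\ INR n <= lam <= (1+eps)*INR n /\ 0 < c /\
   (forall y, X <= y -> (1-eps)^3/(1+eps)^2 * f n * g y <= g (lam*y)) /\
   (forall z, X <= z <= lam*X -> c <= g z).
Proof.
  intros Hn Hfn He He2.
  assert (Hn2 : 2 <= INR n) by (apply (le_INR 2); auto).
  destruct hreg as [hnd | hl].
  - destruct (goodm f g hwsm hno n eps ltac:(lia) He ltac:(lra)) as [X0 [HX0 HG]].
    exists (X0+1), ((1+eps)*INR n), (g (X0+1)). split; [lra|]. split; [nra|].
    split; [apply hg; lra|]. split.
    + intros y Hy. destruct (HG y ltac:(lra)) as [m [[Hm1 Hm2] [H1 [H2 H3]]]].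
      pose proof (key_ineq f g n m eps ltac:(lra) Hfn H1 H2 H3) as K.
      assert (Gy : g y <= g (INR m)) by (apply hnd; lra).
      assert (Gm : g (INR (n*m)) <= g ((1+eps)*INR n * y)).
      { apply hnd. rewrite mult_INR; nra. rewrite mult_INR; nra. }
      assert (0 < g y) by (apply hg; lra).
      apply arith_K; try lra.
      assert (0 <= (1-eps)^2 * f n) by (apply Rmult_le_pos; [apply pow2_ge_0|lra]).
      assert ((1-eps)^2 * f n * g y <= (1-eps)^2 * f n * g (INR m))
        by (apply Rmult_le_compat_l; auto).
      assert (0 <= (1-eps) * ((1-eps)^2 * f n * g y)) by (apply Rmult_le_pos; nra).
      assert (0 <= eps * ((1+eps) * g ((1 + eps) * INR n * y))).
      { apply Rmult_le_pos; [lra|]. apply Rmult_le_pos; [lra|]. left; apply hg. nra. }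
      set (G := g ((1 + eps) * INR n * y)) in *.
      assert (0 <= G) by (left; apply hg; nra).
      assert (S1 : (1-eps)^2 * f n * g y <= (1+eps) * G) by nra.
      assert (S2 : (1-eps) * ((1-eps)^2 * f n * g y) <= (1-eps)^2 * f n * g y) by nra.
      assert (S3 : (1+eps) * G <= (1+eps)^2 * G) by nra.
      replace ((1-eps)^3 * f n * g y) with ((1-eps) * ((1-eps)^2 * f n * g y)) by ring.
      lra.
    + intros z Hz. apply hnd; lra.
  - destruct (hl eps He) as [d [Hd Hdl]].
    set (e2 := Rmin eps (d/2)).
    assert (He2a : 0 < e2) by (apply Rmin_glb_lt; lra).
    assert (He2b : e2 <= eps) by apply Rmin_l.
    assert (He2c : e2 <= d/2) by apply Rmin_r.
    destruct (goodm f g hwsm hno n e2 ltac:(lia) He2a ltac:(lra)) as [X0 [HX0 HG]].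
    destruct (luc_lower g hg hl (X0+1) (INR n * (X0+1)) ltac:(lra)) as [c [Hc Hcl]].
    exists (X0+1), (INR n), c. split; [lra|]. split; [nra|]. split; auto. split.
    + intros y Hy. destruct (HG y ltac:(lra)) as [m [[Hm1 Hm2] [H1 [H2 H3]]]].
      pose proof (key_ineq f g n m e2 ltac:(lra) Hfn H1 H2 H3) as K.
      assert (R1 : Rabs (INR m / y - 1) < d).
      { assert (1 <= INR m / y <= 1 + e2).
        { split; apply (Rmult_le_reg_r y); try lra;
          replace (INR m / y * y) with (INR m) by (field; lra); lra. }
        rewrite Rabs_right; lra. }
      assert (R2 : Rabs (INR (n*m) / (INR n * y) - 1) < d).
      { rewrite mult_INR. replace (INR n * INR m / (INR n * y)) with (INR m / y) by (field; lra).
        auto. }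
      assert (0 < g y) by (apply hg; lra).
      assert (0 < g (INR n * y)) by (apply hg; nra).
      assert (P1 : 0 < INR m) by lra.
      assert (P2 : 0 < y) by lra.
      assert (P3 : 0 < INR (n*m)) by (rewrite mult_INR; nra).
      assert (P4 : 0 < INR n * y) by nra.
      pose proof (ratio_bounds _ _ _ H (Hdl _ _ P1 P2 R1)) as [B1 _].
      pose proof (ratio_bounds _ _ _ H0 (Hdl _ _ P3 P4 R2)) as [_ B2].
      apply arith_K; try lra.
      assert (Q1 : (1-eps)^2 <= (1-e2)^2) by (apply pow_incr; lra).
      assert (0 <= (1-eps)^2 * f n) by (apply Rmult_le_pos; [apply pow2_ge_0|lra]).
      assert (T1 : (1-eps)^3 * f n * g y <= (1-eps)^2 * f n * g (INR m)).
      { replace ((1-eps)^3 * f n * g y) with ((1-eps)^2 * f n * ((1-eps) * g y)) by ring.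
        apply Rmult_le_compat_l; auto. }
      assert (T2 : (1-eps)^2 * f n * g (INR m) <= (1-e2)^2 * f n * g (INR m)).
      { assert (0 <= g (INR m)) by (left; apply hg; lra).
        apply Rmult_le_compat_r; auto. apply Rmult_le_compat_r; lra. }
      assert (0 <= g (INR (n*m))) by (left; apply hg; rewrite mult_INR; nra).
      assert (T3 : (1+e2) * g (INR (n*m)) <= (1+eps) * g (INR (n*m))) by nra.
      assert (T4 : (1+eps) * g (INR (n*m)) <= (1+eps)^2 * g (INR n * y)).
      { replace ((1+eps)^2 * g (INR n * y)) with ((1+eps) * ((1+eps) * g (INR n * y))) by ring.
        apply Rmult_le_compat_l; lra. }
      lra.
    + intros z Hz. apply Hcl; lra.
Qed.

Lemma exp_ge_1plus x : 1 + x <= exp x.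
Proof. destruct (Req_dec x 0) as [->|H]. rewrite exp_0; lra. left; apply exp_ineq1; auto. Qed.

Lemma K_lower e : 0 < e <= 1/2 -> exp (-8*e) <= (1-e)^3/(1+e)^2.
Proof. intros He.
  assert (A1 : exp (-2*e) <= 1 - e).
  { pose proof (exp_ge_1plus (2*e)).
    assert (exp (-2*e) * exp (2*e) = 1) by (rewrite <- exp_plus; replace (-2*e + 2*e) with 0 by ring; apply exp_0).
    assert (0 < exp (-2*e)) by apply exp_pos. nra. }
  assert (A2 : 1 + e <= exp e) by apply exp_ge_1plus.
  assert (E : exp (-8*e) = exp (-2*e)^3 / exp e ^2).
  { assert (B1 : exp (-2*e)^3 = exp (-8*e) * exp e ^ 2).
    { simpl. rewrite !Rmult_1_r, <- !exp_plus. f_equal. ring. }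
    rewrite B1. field. pose proof (exp_pos e). lra. }
  rewrite E. pose proof (exp_pos (-2*e)). pose proof (exp_pos e).
  unfold Rdiv. apply Rmult_le_compat.
  - apply pow_le; lra.
  - left; apply Rinv_0_lt_compat, pow_lt; lra.
  - apply pow_incr; lra.
  - apply Rinv_le_contravar. apply pow_lt; lra. apply pow_incr; lra.
Qed.

Lemma core (f : nat -> R) (g : R -> R) (hf : forall n, 0 <= f n)
  (hg : forall x, 0 < x -> 0 < g x)
  (hwsm : weakly_supermultiplicative f) (hno : normal_order f g)
  (hreg : nondecreasing_pos g \/ log_uniformly_continuous g) n rho :
  (2<=n)%nat -> 0 < f n -> rho < ln (f n) / ln (INR n) ->
  upper_density_zero (fun m => (2 <= m)%nat /\ f m < exp (rho * ln (INR m))).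
Proof.
  intros Hn Hfn Hrho.
  assert (Hn2 : 2 <= INR n) by (apply (le_INR 2); auto).
  assert (HL : 0 < ln (INR n)) by (rewrite <- ln_1; apply ln_increasing; lra).
  set (L := ln (INR n)) in *.
  set (th := ln (f n) / L) in *.
  assert (Hfe : f n = exp (th * L)).
  { unfold th. replace (ln (f n) / L * L) with (ln (f n)) by (field; lra).
    rewrite exp_ln; auto. }
  set (eta := th - rho).
  assert (Heta : 0 < eta) by (unfold eta; lra).
  assert (Hth : 0 <= Rabs th) by apply Rabs_pos.
  set (eps := Rmin (1/2) (eta * L / (2 * (8 + Rabs th)))).
  assert (He1 : 0 < eps).
  { apply Rmin_glb_lt; [lra| apply Rdiv_lt_0_compat; nra]. }
  assert (He2 : eps <= 1/2) by apply Rmin_l.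
  assert (He3 : eps * (8 + Rabs th) < eta * L).
  { assert (eps <= eta * L / (2 * (8 + Rabs th))) by apply Rmin_r.
    assert (eps * (8 + Rabs th) <= eta * L / 2).
    { apply Rle_trans with (eta * L / (2 * (8 + Rabs th)) * (8 + Rabs th)).
      apply Rmult_le_compat_r; lra. right; field; lra. }
    nra. }
  destruct (Qlemma f g hf hg hwsm hno hreg n eps Hn Hfn He1 He2)
    as [X [lam [c [HX [Hlam [Hc [Hstep Hloc]]]]]]].
  set (A := (1-eps)^3/(1+eps)^2 * f n) in *.
  assert (HA : exp (-8*eps + th * L) <= A).
  { unfold A. rewrite exp_plus, <- Hfe. apply Rmult_le_compat_r; [lra| apply K_lower; lra]. }
  assert (HA0 : 0 < A) by (pose proof (exp_pos (-8*eps + th*L)); lra).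
  assert (Hlam1 : 1 < lam) by lra.
  assert (HLam : L <= ln lam <= L + eps).
  { split. apply ln_le_mono; lra.
    apply Rle_trans with (ln ((1+eps) * INR n)). apply ln_le_mono; lra.
    rewrite ln_mult by lra. fold L.
    assert (ln (1+eps) <= eps); [|lra].
    rewrite <- (ln_exp eps) at 2. apply ln_le_mono; [lra| apply exp_ge_1plus]. }
  pose proof (iter_bound g X lam A c HX Hlam1 HA0 Hc Hstep Hloc) as IB.
  set (Lam := ln lam) in *.
  assert (HlnA : -8*eps + th*L <= ln A).
  { rewrite <- (ln_exp (-8*eps + th*L)). apply ln_le_mono; auto. apply exp_pos. }
  set (beta := ln A / Lam).
  assert (Hbeta : rho < beta).
  { unfold beta. assert (0 < Lam) by lra.
    apply (Rmult_lt_reg_r Lam); auto. replace (ln A / Lam * Lam) with (ln A) by (field; lra).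
    assert (th * (Lam - L) <= Rabs th * (Lam - L)) by (apply Rmult_le_compat_r; [lra| apply Rle_abs]).
    assert (Rabs th * (Lam - L) <= Rabs th * eps) by (apply Rmult_le_compat_l; lra).
    assert (eta * L <= eta * Lam) by (apply Rmult_le_compat_l; lra).
    replace (rho * Lam) with (th * Lam - eta * Lam) by (unfold eta; ring).
    nra. }
  set (C := c * exp (- Rabs (ln A)) * exp (- beta * ln X)).
  assert (HC : 0 < C).
  { unfold C. repeat apply Rmult_lt_0_compat; auto; apply exp_pos. }
  assert (GB : forall y, X <= y -> C * exp (beta * ln y) <= g y).
  { intros y Hy. specialize (IB y Hy).
    assert (E : ln (y / X) = ln y - ln X).
    { unfold Rdiv. rewrite ln_mult, ln_Rinv; try lra. apply Rinv_0_lt_compat; lra. }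
    rewrite E in IB. apply Rle_trans with (2 := IB). right.
    unfold C. rewrite !Rmult_assoc, <- !exp_plus. do 2 f_equal. unfold beta. field. lra. }
  set (Y := Rmax X (exp (ln (2/C) / (beta - rho)))).
  destruct (INR_unbounded Y) as [M1 HM1].
  apply udz_mono with (B := fun m => bad f g (1/2) m \/ (m <= M1)%nat).
  2: { apply udz_union; [apply (hno (1/2)); lra| apply udz_bounded]. }
  intros m [Hm2 Hfm]. destruct (le_lt_dec m M1) as [|Hlt]; [right; auto| left].
  assert (HmY : Y < INR m) by (apply lt_INR in Hlt; lra).
  pose proof (Rmax_l X (exp (ln (2/C) / (beta - rho)))).
  pose proof (Rmax_r X (exp (ln (2/C) / (beta - rho)))).
  fold Y in H, H0.
  assert (HmX : X <= INR m) by lra.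
  assert (Hlm : ln (2/C) / (beta - rho) <= ln (INR m)).
  { rewrite <- (ln_exp (ln (2/C)/(beta-rho))). apply ln_le_mono. apply exp_pos. lra. }
  assert (Hlm2 : ln (2/C) <= (beta - rho) * ln (INR m)).
  { replace (ln (2/C)) with (ln (2/C) / (beta - rho) * (beta - rho)) by (field; lra).
    rewrite Rmult_comm. apply Rmult_le_compat_l; lra. }
  assert (Hx : 2 / C <= exp ((beta - rho) * ln (INR m))).
  { rewrite <- (exp_ln (2/C)) by (apply Rdiv_lt_0_compat; lra). apply exp_le_mono; auto. }
  assert (Hx2 : 2 * exp (rho * ln (INR m)) <= C * exp (beta * ln (INR m))).
  { replace (beta * ln (INR m)) with ((beta - rho) * ln (INR m) + rho * ln (INR m)) by ring.
    rewrite exp_plus. pose proof (exp_pos (rho * ln (INR m))).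
    assert (2 <= C * exp ((beta - rho) * ln (INR m))).
    { replace 2 with (C * (2 / C)) by (field; lra). apply Rmult_le_compat_l; lra. }
    nra. }
  specialize (GB (INR m) HmX).
  split; [lia|].
  rewrite Rabs_minus_sym. apply Rle_ge.
  apply Rle_trans with (g (INR m) - f m); [lra| apply Rle_abs].
Qed.

Lemma logratio_some f n r : logratio f n = Some r -> 0 < f n /\ r = ln (f n) / ln (INR n).
Proof. unfold logratio. destruct (Rlt_dec 0 (f n)); intro H; inversion H; auto. Qed.
Lemma logratio_pos f n : 0 < f n -> logratio f n = Some (ln (f n) / ln (INR n)).
Proof. unfold logratio. destruct (Rlt_dec 0 (f n)); intro H; [auto| lra]. Qed.
Lemma logratio_none f n : (forall k, 0 <= f k) -> logratio f n = None -> f n = 0.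
Proof. intro hf. unfold logratio. destruct (Rlt_dec 0 (f n)); intro H; [discriminate|].
  specialize (hf n); lra. Qed.

Lemma incl_lemma f (hf : forall k, 0 <= f k) m rho :
  (2 <= m)%nat ->
  (match logratio f m with Some r => r < rho | None => True end) ->
  f m < exp (rho * ln (INR m)).
Proof. intros Hm H.
  assert (Hm2 : 2 <= INR m) by (apply (le_INR 2); auto).
  assert (HL : 0 < ln (INR m)) by (rewrite <- ln_1; apply ln_increasing; lra).
  destruct (logratio f m) eqn:E.
  - apply logratio_some in E. destruct E as [Hp ->].
    rewrite <- (exp_ln (f m)) at 1 by auto. apply exp_increasing.
    apply (Rmult_lt_compat_r (ln (INR m))) in H; auto.
    replace (ln (f m) / ln (INR m) * ln (INR m)) with (ln (f m)) in H by (field; lra). lra.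
  - rewrite (logratio_none f m hf E). apply exp_pos.
Qed.

Theorem theorem1 (f : nat -> R) (g : R -> R)
  (hf : forall n, 0 <= f n)
  (hg : forall x, 0 < x -> 0 < g x)
  (hwsm : weakly_supermultiplicative f)
  (hno : normal_order f g)
  (hreg : nondecreasing_pos g \/ log_uniformly_continuous g) :
  exists l : Rinf, is_sup_logratio f l /\ is_esslim_logratio f l.
Proof.
  set (E := fun r => exists n, (2 <= n)%nat /\ logratio f n = Some r).
  assert (Hne : exists r, E r).
  { apply NNPP; intro Hc.
    assert (Hz : forall n, (2 <= n)%nat -> bad f g (1/2) n).
    { intros n Hn. assert (f n = 0).
      { destruct (Rlt_dec 0 (f n)) as [Hp|Hp].
        - exfalso; apply Hc. exists (ln (f n) / ln (INR n)), n. split; auto.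
          apply logratio_pos; auto.
        - specialize (hf n); lra. }
      assert (0 < g (INR n)) by (apply hg, lt_0_INR; lia).
      split; [lia|]. rewrite H, Rminus_0_l, Rabs_Ropp, Rabs_right; lra. }
    destruct (hno (1/2) ltac:(lra) (1/4) ltac:(lra)) as [N0 HN0].
    specialize (HN0 (Nat.max N0 4) ltac:(lia)).
    pose proof (cnt_ge (bad f g (1/2)) (Nat.max N0 4) Hz).
    assert (4 <= INR (Nat.max N0 4)) by (replace 4 with (INR 4) by (simpl; lra); apply le_INR; lia).
    apply div_le_elim in HN0; [|lra]. unfold bad in H. lra. }
  assert (Hcore : forall n rho, (2 <= n)%nat -> logratio f n = Some (ln (f n) / ln (INR n)) ->
     0 < f n -> rho < ln (f n) / ln (INR n) ->
     upper_density_zero (fun m => (2 <= m)%nat /\ f m < exp (rho * ln (INR m)))).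
  { intros n rho Hn _ Hp Hr. eapply core; eauto. }
  destruct (classic (bound E)) as [Hb|Hnb].
  - destruct (completeness E Hb Hne) as [a [Hub Hlub]].
    assert (Happ : forall eps, 0 < eps -> exists n r,
          (2 <= n)%nat /\ logratio f n = Some r /\ a - eps < r).
    { intros eps he. apply NNPP; intro Hc.
      assert (is_upper_bound E (a - eps)).
      { intros r [n [Hn Hr]]. apply Rnot_lt_le. intro Hlt. apply Hc. exists n, r. auto. }
      specialize (Hlub _ H). lra. }
    exists (Fin a). split.
    + split; auto. intros n r Hn Hr. apply Hub. exists n; auto.
    + intros eps he. destruct (Happ (eps/2) ltac:(lra)) as [n [r [Hn [Hr Hlt]]]].
      destruct (logratio_some f n r Hr) as [Hp Hreq].
      apply udz_dz. apply udz_mono with (2 := core f g hf hg hwsm hno hreg n (a - eps) Hn Hp ltac:(lra)).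
      intros m [Hm Hmt]. split; auto. apply incl_lemma; auto.
      destruct (logratio f m) eqn:Em; auto.
      assert (r0 <= a) by (apply Hub; exists m; auto).
      rewrite Rabs_left1 in Hmt by lra. lra.
  - assert (Hun : forall M, exists n r, (2 <= n)%nat /\ logratio f n = Some r /\ M < r).
    { intros M. apply NNPP; intro Hc. apply Hnb. exists M. intros r [n [Hn Hr]].
      apply Rnot_lt_le. intro Hlt. apply Hc. exists n, r; auto. }
    exists PInf. split; auto.
    intros M. destruct (Hun M) as [n [r [Hn [Hr Hlt]]]].
    destruct (logratio_some f n r Hr) as [Hp Hreq].
    apply udz_dz. apply udz_mono with (2 := core f g hf hg hwsm hno hreg n M Hn Hp ltac:(lra)).
    intros m [Hm Hmt]. split; auto. apply incl_lemma; auto.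
Qed.
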